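(* Let $D$ be a Krull domain. Then the set $\mathrm{Princ}(D)$ of principal ideals of $D$ is proconstructible in $\mathcal I(D)$.
   Context: $\mathcal I(D)$ is the set of ideals of $D$ with the Zariski topology having basis of open sets $\mathcal B(x_1,\ldots,x_n):=\{I\in\mathcal I(D)\mid x_1,\ldots,x_n\in I\}$; it is a spectral space. The constructible topology is the coarsest topology in which all open quasi-compact subsets are clopen; proconstructible means closed in the constructible topology. *)

(* Defs.v *)
From HB Require Import structures.
From mathcomp Require Import all_boot all_order all_algebra fraction.
From mathcomp Require Import boolp classical_sets cardinality.
Set Implicit Arguments. Unset Strict Implicit. Unset Printing Implicit Defensive.
Import Order.TTheory GRing.Theory Num.Theory.
Local Open Scope ring_scope.
Local Open Scope classical_set_scope.

(* A (normalized, rank-one) discrete valuation on a field K, given by its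
   values on K^x : v (x*y) = v x + v y, v (x+y) >= min (v x) (v y),
   and v : K^x -> Z surjective. Its valuation ring is {0} u {x | v x >= 0}. *)
Definition discrete_valuation (K : fieldType) (v : K -> int) : Prop :=
  [/\ (forall x y : K, x != 0 -> y != 0 -> v (x * y) = v x + v y),
      (forall x y : K, x != 0 -> y != 0 -> x + y != 0 ->
          Order.min (v x) (v y) <= v (x + y)) &
      (forall n : int, exists x : K, x != 0 /\ v x = n)].

(* D is a Krull domain: there is a family (V_i) of DVRs of the quotient field
   K of D with D = \bigcap_i V_i and with finite character (each nonzero
   element of D is a nonunit in only finitely many V_i). *)
Definition krull_domain (D : idomainType) : Prop :=
  exists (I : Type) (v : I -> {fraction D} -> int),
    [/\ (forall i, discrete_valuation (v i)),
        (forall x : {fraction D},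
           (exists d : D, x = FracField.tofrac d) <->
           (forall i, x = 0 \/ 0 <= v i x)) &
        (forall d : D, d != 0 ->
           finite_set [set i | v i (FracField.tofrac d) != 0])].

Definition is_ideal (D : comNzRingType) (I : set D) : Prop :=
  [/\ I 0, (forall x y, I x -> I y -> I (x + y)) &
      (forall r x, I x -> I (r * x))].

Definition ideals (D : comNzRingType) : set (set D) := [set I | is_ideal I].
Arguments ideals D : clear implicits.

Definition zbasic (D : comNzRingType) (xs : seq D) : set (set D) :=
  [set I | is_ideal I /\ (forall x, x \in xs -> I x)].

Definition zariski_open (D : comNzRingType) (U : set (set D)) : Prop :=
  U `<=` ideals D /\
  forall I, U I -> exists xs : seq D, zbasic xs I /\ zbasic xs `<=` U.

Definition zariski_quasicompact (D : comNzRingType) (U : set (set D)) : Prop :=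
  U `<=` ideals D /\
  forall F : set (set (set D)), (forall W, F W -> zariski_open W) ->
    U `<=` \bigcup_(W in F) W ->
    exists G : set (set (set D)),
      [/\ G `<=` F, finite_set G & U `<=` \bigcup_(W in G) W].

Definition is_topology (T : Type) (X : set T) (Op : set (set T)) : Prop :=
  [/\ (forall W, Op W -> W `<=` X), Op X,
      (forall A B, Op A -> Op B -> Op (A `&` B)) &
      (forall F : set (set T), F `<=` Op -> Op (\bigcup_(W in F) W))].

(* open sets of the constructible topology on I(D): the coarsest topology
   on I(D) in which every Zariski open quasi-compact subset is clopen *)
Definition constructible_open (D : comNzRingType) (W : set (set D)) : Prop :=
  forall Op : set (set (set D)), is_topology (ideals D) Op ->
    (forall U, zariski_open U -> zariski_quasicompact U ->
       Op U /\ Op (ideals D `\` U)) ->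
    Op W.

Definition proconstructible (D : comNzRingType) (Y : set (set D)) : Prop :=
  Y `<=` ideals D /\ constructible_open (ideals D `\` Y).

Definition principal_ideals (D : comNzRingType) : set (set D) :=
  [set I | exists a : D, I = [set a * r | r in [set: D]]].
Arguments principal_ideals D : clear implicits.

(* Main.v *)
Require Import Defs.
From mathcomp Require Import all_boot all_order all_algebra fraction.
From mathcomp Require Import boolp classical_sets functions cardinality.
From mathcomp Require Import zify.
Set Implicit Arguments. Unset Strict Implicit. Unset Printing Implicit Defensive.
Import Order.TTheory GRing.Theory Num.Theory.
Local Open Scope ring_scope.
Local Open Scope classical_set_scope.

Lemma finite_enum (T : Type) (A : set T) : finite_set A ->
  exists n (e : nat -> option T), forall x, A x -> exists2 k, (k < n)%N & e k = Some x.
Proof.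
move=> /finite_set_leP [n /pcard_leP [f]].
pose e := fun k : nat => match pselect (exists x, A x /\ f x = k) with
  | left h => Some (projT1 (cid h)) | right _ => None end.
exists n, e => x Ax.
have fx : `I_n (f x) by apply: funS.
exists (f x) => //.
rewrite /e; case: pselect => [h|[]]; last by exists x.
case: (cid h) => y [Ay fy] /=; congr Some.
by apply: (@inj _ _ _ f); rewrite ?inE //.
Qed.

Lemma krull_div (D : idomainType) : krull_domain D -> forall f : D, f != 0 ->
  exists s : seq D, forall a r : D, a * r = f ->
    exists b, b \in s /\ (exists u, a = b * u) /\ (exists w, b = a * w).
Proof.
move=> [I [v [hv hint hfin]]] f f0.
have [n [e he]] := finite_enum (hfin f f0).
pose tf := @FracField.tofrac D.
have vge0 : forall (d : D) i, d != 0 -> (0 <= v i (tf d))%R.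
  move=> d i d0; have := (hint (tf d)).1 (ex_intro _ d erefl) i.
  by case=> // /eqP; rewrite tofrac_eq0 (negPf d0).
have vM : forall (d r : D) i, d != 0 -> r != 0 -> v i (tf (d * r)) = (v i (tf d) + v i (tf r))%R.
  move=> d r i d0 r0; rewrite /tf tofracM; case: (hv i) => hm _ _.
  by apply: hm; rewrite tofrac_eq0.
have divle : forall (a b : D), a != 0 -> b != 0 ->
    (forall i, v i (tf b) <= v i (tf a))%R -> exists u, a = b * u.
  move=> a b a0 b0 hab.
  have tb0 : tf b != 0 by rewrite tofrac_eq0.
  have ta0 : tf a != 0 by rewrite tofrac_eq0.
  pose x := tf a / tf b.
  have x0 : x != 0 by rewrite mulf_neq0 ?invr_eq0.
  have bx : tf b * x = tf a by rewrite /x mulrC divfK.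
  have [u hu] : exists u, x = tf u.
    apply/(hint x).2 => i; right.
    case: (hv i) => hm _ _; have := hm _ _ tb0 x0; rewrite bx => h.
    have := hab i; rewrite h; lia.
  exists u; apply/eqP; rewrite -tofrac_eq tofracM -/tf -hu bx //.
pose ov := fun (a : D) (k : nat) => if e k is Some i then v i (tf a) else 0%R.
pose N := (\max_(k < n) absz (ov f k))%N.
pose code := fun a : D => [ffun k : 'I_n => (inord (absz (ov a k)) : 'I_N.+1)].
pose dv := fun a : D => exists r, a * r = f.
pose rep := fun t => match pselect (exists a, dv a /\ code a = t) with
  | left h => Some (projT1 (cid h)) | right _ => None end.
exists (pmap rep (enum {ffun 'I_n -> 'I_N.+1})) => a r ar.
have [b [hb [dvb cb]]] : exists b, rep (code a) = Some b /\ dv b /\ code b = code a.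
  rewrite /rep; case: pselect => [h|[]]; last by exists a; split => //; exists r.
  by case: (cid h) => b [db cb] /=; exists b.
have a0 : a != 0 by apply: contra_neq f0 => a0; rewrite -ar a0 mul0r.
have r0 : r != 0 by apply: contra_neq f0 => r0; rewrite -ar r0 mulr0.
case: dvb => r' br.
have b0 : b != 0 by apply: contra_neq f0 => b0; rewrite -br b0 mul0r.
have r1 : r' != 0 by apply: contra_neq f0 => r2; rewrite -br r2 mulr0.
have bnd : forall (d s : D), d * s = f -> d != 0 -> s != 0 -> forall i,
    (0 <= v i (tf d) <= v i (tf f))%R.
  move=> d s ds d0 s0 i; rewrite -ds vM // vge0 //=.
  by have := vge0 s i s0; lia.
have veq : forall i, v i (tf a) = v i (tf b).
  move=> i; have := bnd _ _ ar a0 r0 i; have := bnd _ _ br b0 r1 i.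
  have [vf0|vfn] := eqVneq (v i (tf f)) 0%R.
    by rewrite vf0; lia.
  have [k kn ek] := he i vfn.
  have := congr1 (fun g : {ffun 'I_n -> 'I_N.+1} => nat_of_ord (g (Ordinal kn))) cb.
  rewrite /code !ffunE /ov /= ek.
  have Nk : (absz (v i (tf f)) <= N)%N.
    have := @leq_bigmax _ (fun k : 'I_n => absz (ov f k)) (Ordinal kn).
    by rewrite /ov /= ek.
  move=> h1 h2 h3; move: h1; rewrite !inordK; first by lia.
    by lia. by lia.
exists b; split; first by rewrite mem_pmap; apply/mapP; exists (code a); [by rewrite mem_enum | by rewrite hb].
split; apply: divle => // i; rewrite veq //.
Qed.

Section Top.
Variable D : comNzRingType.

Lemma zbasic_open (xs : seq D) : zariski_open (zbasic xs).
Proof. split; first by move=> J [].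
move=> J hJ; exists xs; split=> //. Qed.

Lemma zbasic_qc (xs : seq D) : zariski_quasicompact (zbasic xs).
Proof.
split; first by move=> J [].
move=> F hF cov.
pose J0 := [set x : D | forall K, is_ideal K -> (forall y, y \in xs -> K y) -> K x].
have J0i : is_ideal J0.
  split=> [K [] //|x y hx hy K hK hxs|r x hx K hK hxs].
  - by case: (hK) => _ hD _; apply: hD; [apply: hx|apply: hy].
  - by case: (hK) => _ _ hM; apply: hM; apply: hx.
have J0b : zbasic xs J0 by split=> // x hx K _; apply.
have [W FW WJ0] := cov _ J0b.
have [ys [[_ hys] sub]] := (hF W FW).2 J0 WJ0.
exists [set W]; split.
- by move=> X ->.
- exact: finite_set1.
- move=> K [Ki Kx]; exists W => //; apply: sub; split=> // y /hys; apply => //.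
Qed.

Definition nbhd (F gs : seq D) : set (set D) :=
  [set J | is_ideal J /\ (forall x, x \in F -> J x) /\ (forall g, g \in gs -> ~ J g)].

Lemma nbhd_open (Op : set (set (set D))) : is_topology (ideals D) Op ->
  (forall U, zariski_open U -> zariski_quasicompact U -> Op U /\ Op (ideals D `\` U)) ->
  forall F gs, Op (nbhd F gs).
Proof.
move=> [_ _ hI _] hU F; elim=> [|g gs IH].
  have -> : nbhd F [::] = zbasic F.
    apply/seteqP; split=> J; first by move=> [h1 [h2 h3]]; split.
    by move=> [h1 h2]; split=> //; split.
  exact: (hU _ (zbasic_open F) (zbasic_qc F)).1.
have -> : nbhd F (g :: gs) = nbhd F gs `&` (ideals D `\` zbasic [:: g]).
  apply/seteqP; split=> J.
  - move=> [Ji [JF Jg]]; split.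
      by split=> //; split=> // x xg; apply: Jg; rewrite inE xg orbT.
    split=> // -[_ h]; apply: (Jg g); first by rewrite inE eqxx.
    by apply: h; rewrite inE.
  - move=> [[Ji [JF Jg]] [_ h]]; split=> //; split=> // x; rewrite inE => /orP[/eqP->|xg].
      by move=> Jx; apply: h; split=> // y; rewrite inE => /eqP->.
    exact: Jg.
apply: hI => //; exact: (hU _ (zbasic_open [:: g]) (zbasic_qc [:: g])).2.
Qed.
End Top.

Lemma sep_seq (D : comNzRingType) (J : set D) : is_ideal J ->
  (forall b : D, J <> [set b * r | r in [set: D]]) ->
  forall s : seq D, exists F gs : seq D,
    [/\ (forall x, x \in F -> J x), (forall g, g \in gs -> ~ J g) &
      forall b, b \in s -> (exists g, g \in gs /\ exists t, g = b * t) \/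
                           (exists x, x \in F /\ ~ exists t, x = b * t)].
Proof.
move=> Ji np; elim=> [|b s [F [gs [hF hg hs]]]].
  by exists [::], [::]; split.
have [Jb|Jb] := pselect (J b).
- have [x [Jx nx]] : exists x, J x /\ ~ exists t, x = b * t.
    apply: contrapT => hn; apply: (np b); apply/seteqP; split=> y.
      move=> Jy; have [t ->] : exists t, y = b * t.
        by apply: contrapT => h; apply: hn; exists y.
      by exists t.
    case=> t _ <-; case: Ji => _ _ hM; rewrite mulrC; exact: hM.
  exists (x :: F), gs; split=> //.
    by move=> y; rewrite inE => /orP[/eqP->|/hF].
  move=> c; rewrite inE => /orP[/eqP->|/hs[[g [gi hg']]|[y [yi hy]]]].
  + by right; exists x; rewrite inE eqxx.
  + by left; exists g.
  + by right; exists y; rewrite inE yi orbT.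
- exists F, (b :: gs); split=> //.
    by move=> g; rewrite inE => /orP[/eqP->|/hg].
  move=> c; rewrite inE => /orP[/eqP->|/hs[[g [gi hg']]|[y [yi hy]]]].
  + by left; exists b; rewrite inE eqxx; split=> //; exists 1; rewrite mulr1.
  + by left; exists g; rewrite inE gi orbT.
  + by right; exists y.
Qed.

Theorem theorem5p11 (D : idomainType) :
  krull_domain D -> proconstructible (principal_ideals D).
Proof.
move=> hK; split.
  move=> J [a ->]; split.
  - by exists 0; rewrite ?mulr0.
  - by move=> x y [r _ <-] [t _ <-]; exists (r + t); rewrite ?mulrDr.
  - by move=> r x [t _ <-]; exists (r * t); rewrite // mulrCA.
move=> Op hT hU.
have key : forall J, (ideals D `\` principal_ideals D) J ->
    exists F gs, nbhd F gs J /\ nbhd F gs `<=` ideals D `\` principal_ideals D.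
  move=> J [Ji Jnp].
  have np : forall b : D, J <> [set b * r | r in [set: D]].
    by move=> b Jb; apply: Jnp; exists b.
  have [f [Jf f0]] : exists f, J f /\ f != 0.
    apply: contrapT => hn; apply: (np 0); apply/seteqP; split=> y.
      move=> Jy; exists 0 => //; rewrite mul0r; apply: contrapT => y0.
      by apply: hn; exists y; split=> //; apply/eqP => y0'; apply: y0; rewrite y0'.
    by case=> t _ <-; rewrite mul0r; case: Ji.
  have [s hs] := krull_div hK f0.
  have [F [gs [hF hg hsep]]] := sep_seq Ji np s.
  exists (f :: F), gs; split.
    split=> //; split=> // x; rewrite inE => /orP[/eqP->|/hF] //.
  move=> K [Ki [KF Kg]]; split=> // -[a Ka].
  have : K f by apply: KF; rewrite inE eqxx.
  rewrite Ka => -[r _ ar].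
  have [b [bs [[u au] [w bw]]]] := hs a r ar.
  case: (hsep b bs) => [[g [gi [t gt]]]|[x [xi nx]]].
    by apply: (Kg g gi); rewrite Ka; exists (w * t) => //; rewrite gt bw mulrA.
  have : K x by apply: KF; rewrite inE xi orbT.
  rewrite Ka => -[t _ xt]; apply: nx; by exists (u * t); rewrite -xt au mulrA.
have -> : ideals D `\` principal_ideals D =
    \bigcup_(W in [set W | Op W /\ W `<=` ideals D `\` principal_ideals D]) W.
  apply/seteqP; split=> J.
    move=> hJ; have [F [gs [hJ' sub]]] := key J hJ.
    exists (nbhd F gs) => //; split=> //; exact: nbhd_open.
  by case=> W [_ sub] /sub.
case: hT => _ _ _ hB; apply: hB => W [] //.
Qed.
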